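(* Let $G$ be the $m\times n$ grid with $m,n\ge 2$, and let $X\subseteq V$ contain $t_1=(1,z_1)$ and $t_2=(m,z_2)$ with $1\le z_1<z_2\le n$. Suppose that for every pair of vertices $(a_1,b_1),(a_2,b_2)$ with $a_1<a_2$, $a_1+b_1=a_2+b_2$ and $z_1\le b_2<b_1\le z_2$, some vertex of $X$ separates $(a_1,b_1)$ and $(a_2,b_2)$. Then $X$ is a landmark set of $G$.
   Context: The $m\times n$ grid $G$ has vertex set $V=\{(i,j):1\le i\le m,\ 1\le j\le n\}$, with $(i_1,j_1),(i_2,j_2)$ adjacent iff $|i_1-i_2|+|j_1-j_2|=1$; thus $d((i_1,j_1),(i_2,j_2))=|i_1-i_2|+|j_1-j_2|$. A vertex $x$ separates $u,v$ if $d(x,u)\neq d(x,v)$. A landmark set is $L\subseteq V$ such that every pair of distinct vertices is separated by some vertex of $L$. *)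

(* Defs.v *)
From Stdlib Require Import Arith Lia.

Definition vertex : Type := (nat * nat)%type.

Definition in_grid (m n : nat) (v : vertex) : Prop :=
  1 <= fst v <= m /\ 1 <= snd v <= n.

Definition absdiff (a b : nat) : nat := (a - b) + (b - a).

Definition dist (u v : vertex) : nat :=
  absdiff (fst u) (fst v) + absdiff (snd u) (snd v).

Definition separates (x u v : vertex) : Prop := dist x u <> dist x v.

Definition landmark_set (m n : nat) (L : vertex -> Prop) : Prop :=
  (forall x, L x -> in_grid m n x) /\
  forall u v, in_grid m n u -> in_grid m n v -> u <> v ->
    exists x, L x /\ separates x u v.

(* Main.v *)
Require Import Defs.
From Stdlib Require Import Arith Lia.

Lemma key_cases (m z1 z2 a1 b1 a2 b2 : nat) :
  z1 < z2 ->
  dist (1, z1) (a1, b1) = dist (1, z1) (a2, b2) ->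
  dist (m, z2) (a1, b1) = dist (m, z2) (a2, b2) ->
  1 <= a1 <= m -> 1 <= a2 <= m ->
  (a1, b1) <> (a2, b2) ->
  (a1 + b1 = a2 + b2 /\ a1 <> a2 /\ z1 <= b1 <= z2 /\ z1 <= b2 <= z2) \/
  (b1 < z1 /\ b2 = z2 + (z1 - b1) /\ a1 = a2 + (z2 - z1)) \/
  (b2 < z1 /\ b1 = z2 + (z1 - b2) /\ a2 = a1 + (z2 - z1)).
Proof.
  unfold dist, absdiff; cbn [fst snd]. intros Hz E1 E2 H1 H2 Hne.
  assert (a1 <> a2 \/ b1 <> b2) as Hd.
  { destruct (Nat.eq_dec a1 a2); [|now left]. right. intro; subst; congruence. }
  clear Hne.
  assert (T: forall x y, x <= y -> x - y = 0) by (intros; lia).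
  rewrite (T 1 a1) in E1 by lia. rewrite (T 1 a2) in E1 by lia.
  rewrite (T a1 m) in E2 by lia. rewrite (T a2 m) in E2 by lia.
  destruct (lt_dec b1 z1) as [c1|c1]; [|destruct (le_lt_dec b1 z2) as [c2|c2]];
  (destruct (lt_dec b2 z1) as [d1|d1]; [|destruct (le_lt_dec b2 z2) as [d2|d2]]);
  try (rewrite (T b1 z1) in E1 by (clear E1 E2 Hd; lia)); try (rewrite (T z1 b1) in E1 by (clear E1 E2 Hd; lia));
  try (rewrite (T b1 z2) in E2 by (clear E1 E2 Hd; lia)); try (rewrite (T z2 b1) in E2 by (clear E1 E2 Hd; lia));
  try (rewrite (T b2 z1) in E1 by (clear E1 E2 Hd; lia)); try (rewrite (T z1 b2) in E1 by (clear E1 E2 Hd; lia));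
  try (rewrite (T b2 z2) in E2 by (clear E1 E2 Hd; lia)); try (rewrite (T z2 b2) in E2 by (clear E1 E2 Hd; lia)).
  - exfalso; lia.
  - exfalso; lia.
  - right; left; lia.
  - exfalso; lia.
  - left; lia.
  - exfalso; lia.
  - right; right; lia.
  - exfalso; lia.
  - exfalso; lia.
Qed.

Lemma sym_sep (a2 z1 z2 e : nat) (x : vertex) :
  0 < e -> z1 < z2 -> e <= z1 ->
  separates x (a2, z1 + 1) (a2 + 1, z1) ->
  separates x (a2 + (z2 - z1), z1 - e) (a2, z2 + e).
Proof.
  destruct x as [xi xj]. unfold separates, dist, absdiff; cbn [fst snd]. lia.
Qed.

Lemma sep_sym x u v : separates x u v -> separates x v u.
Proof. unfold separates; auto. Qed.

Theorem mainTheorem11 (m n z1 z2 : nat) (X : vertex -> Prop) :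
  2 <= m -> 2 <= n ->
  (forall x, X x -> in_grid m n x) ->
  1 <= z1 -> z1 < z2 -> z2 <= n ->
  X (1, z1) -> X (m, z2) ->
  (forall a1 b1 a2 b2 : nat,
     in_grid m n (a1, b1) -> in_grid m n (a2, b2) ->
     a1 < a2 -> a1 + b1 = a2 + b2 -> z1 <= b2 -> b2 < b1 -> b1 <= z2 ->
     exists x, X x /\ separates x (a1, b1) (a2, b2)) ->
  landmark_set m n X.
Proof.
  intros Hm Hn HX Hz1 Hz Hz2 Ht1 Ht2 Hyp. split; [exact HX|].
  intros [a1 b1] [a2 b2] Hu Hv Hne.
  destruct (Nat.eq_dec (dist (1, z1) (a1, b1)) (dist (1, z1) (a2, b2))) as [E1|E1];
    [|exists (1, z1); split; assumption].
  destruct (Nat.eq_dec (dist (m, z2) (a1, b1)) (dist (m, z2) (a2, b2))) as [E2|E2];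
    [|exists (m, z2); split; assumption].
  unfold in_grid in Hu, Hv; simpl in Hu, Hv.
  destruct (key_cases m z1 z2 a1 b1 a2 b2 Hz E1 E2 ltac:(lia) ltac:(lia) Hne)
    as [[Hs [Ha [Hb1 Hb2]]] | [[Hb [Hb2 Ha]] | [Hb [Hb1 Ha]]]].
  - destruct (Nat.lt_total a1 a2) as [Hl|[Hl|Hl]]; [|lia|].
    + apply Hyp; unfold in_grid; simpl; lia.
    + destruct (Hyp a2 b2 a1 b1) as [x [Hx Hs']]; unfold in_grid; simpl; try lia.
      exists x; split; [exact Hx| now apply sep_sym].
  - destruct (Hyp a2 (z1 + 1) (a2 + 1) z1) as [x [Hx Hs']]; unfold in_grid; simpl; try lia.
    exists x; split; [exact Hx|].
    subst. pose proof (sym_sep a2 z1 z2 (z1 - b1) x ltac:(lia) Hz ltac:(lia) Hs') as S.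
    replace (z1 - (z1 - b1)) with b1 in S by lia. exact S.
  - destruct (Hyp a1 (z1 + 1) (a1 + 1) z1) as [x [Hx Hs']]; unfold in_grid; simpl; try lia.
    exists x; split; [exact Hx|]. apply sep_sym.
    subst. pose proof (sym_sep a1 z1 z2 (z1 - b2) x ltac:(lia) Hz ltac:(lia) Hs') as S.
    replace (z1 - (z1 - b2)) with b2 in S by lia. exact S.
Qed.
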